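(* Let $\mu>0$, $\beta_1,\beta_2,\gamma_1,\gamma_2>0$, $0<\sigma_{21}\le\sigma_{12}\le 1$, $\mathcal R_i=\beta_i/(\gamma_i+\mu)$, and suppose $(\mathcal R_1,\mathcal R_2)\in\Omega^\mu$. Let $S^*$ be the $S$-component of the unique feasible steady state of system (M) with $I_1^*>0$, $I_2^*>0$. Then, for $i=1,2$, $1-\mathcal R_iS^*>0$ and $A_i>0$, where $A_1=\mathcal R_1\gamma_2\sigma_{21}(1-S^* )-(\gamma_2+\mu)(1-\mathcal R_1S^* )$ and $A_2=\mathcal R_2\gamma_1\sigma_{12}(1-S^* )-(\gamma_1+\mu)(1-\mathcal R_2S^* )$.
   Context: System (M) is the two-strain epidemic model for $(S,I_1,I_2,J_1,J_2,R_1,R_2,R_3)$ (the letters $R_1,R_2,R_3$ denote compartments, while $\mathcal R_1,\mathcal R_2$ denote numbers): $S'=\mu-\beta_1(I_1+J_1)S-\beta_2(I_2+J_2)S-\mu S$, $I_1'=\beta_1S(I_1+J_1)-(\mu+\gamma_1)I_1$, $I_2'=\beta_2S(I_2+J_2)-(\mu+\gamma_2)I_2$, $J_1'=\beta_1\sigma_{21}R_2(I_1+J_1)-(\mu+\gamma_1)J_1$, $J_2'=\beta_2\sigma_{12}R_1(I_2+J_2)-(\mu+\gamma_2)J_2$, $R_1'=\gamma_1I_1-\beta_2\sigma_{12}(I_2+J_2)R_1-\mu R_1$, $R_2'=\gamma_2I_2-\beta_1\sigma_{21}(I_1+J_1)R_2-\mu R_2$, $R_3'=\gamma_1J_1+\gamma_2J_2-\mu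 R_3$. A steady state is a zero of the right-hand side; it is feasible if all components are nonnegative and sum to 1. For $\mu\ge 0$, $\Omega^\mu=\Omega^\mu_1\cap\Omega^\mu_2$ where, for $\{i,j\}=\{1,2\}$, $\Omega^\mu_i=\left\{(\mathcal R_1,\mathcal R_2):\ \mathcal R_i>1,\ \mathcal R_j>\dfrac{(\gamma_i+\mu)\mathcal R_i}{(1+\sigma_{ij}(\mathcal R_i-1))\gamma_i+\mu}\right\}$. (For such parameters a unique feasible steady state with $I_1^*>0,I_2^*>0$ exists.) *)

(* Defs.v *)
From Stdlib Require Import Reals Lra.
Open Scope R_scope.

Definition repnum (beta gamma mu : R) : R := beta / (gamma + mu).

Definition Omega_i (Ri Rj gi sij mu : R) : Prop :=
  Ri > 1 /\ Rj > (gi + mu) * Ri / ((1 + sij * (Ri - 1)) * gi + mu).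

Definition Omega (mu g1 g2 s12 s21 Rn1 Rn2 : R) : Prop :=
  Omega_i Rn1 Rn2 g1 s12 mu /\ Omega_i Rn2 Rn1 g2 s21 mu.

Definition steady_state (mu b1 b2 g1 g2 s12 s21 : R)
  (S I1 I2 J1 J2 R1 R2 R3 : R) : Prop :=
  mu - b1 * (I1 + J1) * S - b2 * (I2 + J2) * S - mu * S = 0 /\
  b1 * S * (I1 + J1) - (mu + g1) * I1 = 0 /\
  b2 * S * (I2 + J2) - (mu + g2) * I2 = 0 /\
  b1 * s21 * R2 * (I1 + J1) - (mu + g1) * J1 = 0 /\
  b2 * s12 * R1 * (I2 + J2) - (mu + g2) * J2 = 0 /\
  g1 * I1 - b2 * s12 * (I2 + J2) * R1 - mu * R1 = 0 /\
  g2 * I2 - b1 * s21 * (I1 + J1) * R2 - mu * R2 = 0 /\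
  g1 * J1 + g2 * J2 - mu * R3 = 0.

Definition feasible (S I1 I2 J1 J2 R1 R2 R3 : R) : Prop :=
  0 <= S /\ 0 <= I1 /\ 0 <= I2 /\ 0 <= J1 /\ 0 <= J2 /\
  0 <= R1 /\ 0 <= R2 /\ 0 <= R3 /\
  S + I1 + I2 + J1 + J2 + R1 + R2 + R3 = 1.

(* Main.v *)
Require Import Defs.
From Stdlib Require Import Reals Lra Psatz.
Open Scope R_scope.

Theorem lemma3p4 (mu b1 b2 g1 g2 s12 s21 : R)
  (S I1 I2 J1 J2 R1 R2 R3 : R) :
  0 < mu -> 0 < b1 -> 0 < b2 -> 0 < g1 -> 0 < g2 ->
  0 < s21 -> s21 <= s12 -> s12 <= 1 ->
  Omega mu g1 g2 s12 s21 (repnum b1 g1 mu) (repnum b2 g2 mu) ->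
  steady_state mu b1 b2 g1 g2 s12 s21 S I1 I2 J1 J2 R1 R2 R3 ->
  feasible S I1 I2 J1 J2 R1 R2 R3 ->
  0 < I1 -> 0 < I2 ->
  let Rn1 := repnum b1 g1 mu in
  let Rn2 := repnum b2 g2 mu in
  0 < 1 - Rn1 * S /\ 0 < 1 - Rn2 * S /\
  0 < Rn1 * g2 * s21 * (1 - S) - (g2 + mu) * (1 - Rn1 * S) /\
  0 < Rn2 * g1 * s12 * (1 - S) - (g1 + mu) * (1 - Rn2 * S).
Proof.
  intros Hm Hb1 Hb2 Hg1 Hg2 Hs21 Hs Hs1 _ Hss Hf HI1 HI2 Rn1 Rn2.
  destruct Hss as [E0 [E1 [E2 [E3 [E4 [E5 [E6 E7]]]]]]].
  destruct Hf as [F0 [F1 [F2 [F3 [F4 [F5 [F6 [F7 F8]]]]]]]].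
  assert (Hs12 : 0 < s12) by lra.
  set (T1 := I1 + J1) in *. set (T2 := I2 + J2) in *.
  assert (HT1 : 0 < T1) by (unfold T1; lra).
  assert (HT2 : 0 < T2) by (unfold T2; lra).
  assert (K1 : b1 * S + b1 * s21 * R2 = mu + g1).
  { apply (Rmult_eq_reg_r T1); [|lra]. unfold T1 in *; nra. }
  assert (K2 : b2 * S + b2 * s12 * R1 = mu + g2).
  { apply (Rmult_eq_reg_r T2); [|lra]. unfold T2 in *; nra. }
  assert (HR2 : 0 < R2).
  { destruct (Rle_lt_or_eq_dec 0 R2 F6) as [h|h]; [exact h|].
    subst R2. nra. }
  assert (HR1 : 0 < R1).
  { destruct (Rle_lt_or_eq_dec 0 R1 F5) as [h|h]; [exact h|].
    subst R1. nra. }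
  assert (P1 : 0 <= b1 * s21 * T1 * R2) by (apply Rmult_le_pos; [|lra];
    apply Rmult_le_pos; [|lra]; apply Rmult_le_pos; lra).
  assert (P2 : 0 <= b2 * s12 * T2 * R1) by (apply Rmult_le_pos; [|lra];
    apply Rmult_le_pos; [|lra]; apply Rmult_le_pos; lra).
  assert (L1 : 1 - Rn1 * S = Rn1 * s21 * R2).
  { assert (Rn1 * S + Rn1 * s21 * R2 = 1); [|lra].
    unfold Rn1, repnum. replace (b1 / (g1 + mu) * S + b1 / (g1 + mu) * s21 * R2)
      with ((b1 * S + b1 * s21 * R2) / (g1 + mu)) by (field; lra).
    rewrite K1. field; lra. }
  assert (L2 : 1 - Rn2 * S = Rn2 * s12 * R1).
  { assert (Rn2 * S + Rn2 * s12 * R1 = 1); [|lra].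
    unfold Rn2, repnum. replace (b2 / (g2 + mu) * S + b2 / (g2 + mu) * s12 * R1)
      with ((b2 * S + b2 * s12 * R1) / (g2 + mu)) by (field; lra).
    rewrite K2. field; lra. }
  assert (HRn1 : 0 < Rn1) by (unfold Rn1, repnum; apply Rdiv_lt_0_compat; lra).
  assert (HRn2 : 0 < Rn2) by (unfold Rn2, repnum; apply Rdiv_lt_0_compat; lra).
  assert (Q1 : 0 < g2 * (1 - S) - (g2 + mu) * R2).
  { assert (mu * R2 <= g2 * I2) by lra.
    assert (g2 * I2 < g2 * (1 - S - R2)).
    { apply Rmult_lt_compat_l; lra. }
    lra. }
  assert (Q2 : 0 < g1 * (1 - S) - (g1 + mu) * R1).
  { assert (mu * R1 <= g1 * I1) by lra.
    assert (g1 * I1 < g1 * (1 - S - R1)).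
    { apply Rmult_lt_compat_l; lra. }
    lra. }
  split; [|split; [|split]].
  - rewrite L1. apply Rmult_lt_0_compat; [|lra]. apply Rmult_lt_0_compat; lra.
  - rewrite L2. apply Rmult_lt_0_compat; [|lra]. apply Rmult_lt_0_compat; lra.
  - rewrite L1.
    replace (Rn1 * g2 * s21 * (1 - S) - (g2 + mu) * (Rn1 * s21 * R2))
      with ((Rn1 * s21) * (g2 * (1 - S) - (g2 + mu) * R2)) by ring.
    apply Rmult_lt_0_compat; [apply Rmult_lt_0_compat|]; lra.
  - rewrite L2.
    replace (Rn2 * g1 * s12 * (1 - S) - (g1 + mu) * (Rn2 * s12 * R1))
      with ((Rn2 * s12) * (g1 * (1 - S) - (g1 + mu) * R1)) by ring.
    apply Rmult_lt_0_compat; [apply Rmult_lt_0_compat|]; lra.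
Qed.
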